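(* For every $\epsilon>0$, the function $\lambda\mapsto G(e(\lambda))$ is bounded on $(\lambda^*+\epsilon,\infty)$.
   Context: Standing setup. Let $\gamma>0$; let $a_1,\dots,a_p>0$ with weights $\omega_i>0$, $\sum_i\omega_i=1$, and $b_1,\dots,b_n>0$ with weights $\pi_j>0$, $\sum_j\pi_j=1$; put $a^*=\max_i a_i$, $b^*=\max_j b_j$. Let $\mu$ be the limiting spectral distribution of $\mathbf{N}\mathbf{N}^T$ where $\mathbf{N}=\mathbf{A}^{1/2}\mathbf{G}\mathbf{B}^{1/2}$ is $k\times l$, $\mathbf{G}$ has iid mean-zero entries of variance $1/l$, $k/l\to\gamma$, and the spectral distributions of $\mathbf{A},\mathbf{B}$ converge to $\nu=\sum_i\omega_i\delta_{a_i}$ and $\underline{\nu}=\sum_j\pi_j\delta_{b_j}$. $\mu$ is a compactly supported probability measure on $[0,\infty)$; $\lambda^*>0$ is the right endpoint of its support, and $s(\lambda)=\int\frac{d\mu(t)}{t-\lambda}$ for $\lambda>\lambda^*$. Define $G(e)=\sum_{j=1}^n\frac{b_j\pi_j}{1+\gamma b_j e}$. It is known (master equations) that there is a continuous (indeed smooth) real function $e(\lambda)$ on $(\lambda^*,\infty)$, never equal to a pole $-1/(\gamma b_j)$ of $G$ and with $a_iG(e(\lambda))\ne\lambda$, satisfying $s(\lambda)=\sum_{i=1}^p\frac{\omega_i}{a_iG(e(\lambda))-\lambda}$ and $e(\lambda)=\sum_{i=1}^p\frac{a_i\omega_i}{a_iG(e(\lambda))-\lambda}$. *)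

(* Defs.v *)
From Stdlib Require Import Reals.
Open Scope R_scope.

(* sumR n f = f 0 + ... + f (n-1)  (indices 0..n-1 stand for 1..n) *)
Fixpoint sumR (n : nat) (f : nat -> R) : R :=
  match n with
  | O => 0
  | S k => sumR k f + f k
  end.

Definition cont_on (f : R -> R) (a b : R) : Prop :=
  forall x, a <= x <= b -> forall eps, 0 < eps ->
    exists d, 0 < d /\ forall y, a <= y <= b -> Rabs (y - x) < d ->
      Rabs (f y - f x) < eps.

(* A (Radon) probability measure on the compact interval [a,b], encoded (Riesz
   representation) by its integration functional I : f |-> \int f dmu, which only
   depends on f restricted to [a,b] and is a positive, normalized linear
   functional on functions continuous on [a,b]. *)
Definition prob_measure_on (I : (R -> R) -> R) (a b : R) : Prop :=
  (forall f g, (forall x, a <= x <= b -> f x = g x) -> I f = I g) /\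
  (forall f g, cont_on f a b -> cont_on g a b ->
      I (fun x => f x + g x) = I f + I g) /\
  (forall c f, cont_on f a b -> I (fun x => c * f x) = c * I f) /\
  (forall f, cont_on f a b -> (forall x, a <= x <= b -> 0 <= f x) -> 0 <= I f) /\
  I (fun _ => 1) = 1.

(* lam is in the support of the measure mu (given by I) supported in [a,lam]:
   every set (lam - d, lam] has positive mu-mass, tested by continuous bumps. *)
Definition right_endpoint_in_support (I : (R -> R) -> R) (a lam : R) : Prop :=
  forall d, 0 < d -> exists f, cont_on f a lam /\
    (forall x, a <= x <= lam -> 0 <= f x) /\
    (forall x, a <= x <= lam -> x <= lam - d -> f x = 0) /\
    0 < I f.

Definition stieltjes (I : (R -> R) -> R) (lam : R) : R :=
  I (fun t => 1 / (t - lam)).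

Definition Gfun (gamma : R) (n : nat) (b pi : nat -> R) (e : R) : R :=
  sumR n (fun j => b j * pi j / (1 + gamma * b j * e)).

(* Main.v *)
Require Import Defs.
From Stdlib Require Import Reals Lra Psatz.
Open Scope R_scope.

Lemma sumR_ge0 n f : (forall j, (j < n)%nat -> 0 <= f j) -> 0 <= sumR n f.
Proof.
  induction n; simpl; intros H; [lra|].
  assert (0 <= sumR n f) by (apply IHn; intros; apply H; lia).
  assert (0 <= f n) by (apply H; lia). lra.
Qed.

Lemma sumR_mem n f : (forall j, (j < n)%nat -> 0 <= f j) ->
  forall j, (j < n)%nat -> f j <= sumR n f.
Proof.
  induction n; simpl; intros H j Hj; [lia|].
  assert (0 <= f n) by (apply H; lia).
  destruct (Nat.eq_dec j n) as [->|Hne].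
  - assert (0 <= sumR n f) by (apply sumR_ge0; intros; apply H; lia). lra.
  - assert (f j <= sumR n f) by (apply IHn; [intros; apply H; lia| lia]). lra.
Qed.

Lemma G_bound gamma b pi e n :
  0 < gamma ->
  (forall j, (j < n)%nat -> 0 < b j /\ 0 < pi j /\ gamma * b j * Rabs e <= 1/2) ->
  0 <= Gfun gamma n b pi e <= 2 * sumR n (fun j => b j * pi j).
Proof.
  intros Hg. unfold Gfun. induction n; simpl; intros H; [lra|].
  assert (IH : 0 <= sumR n (fun j => b j * pi j / (1 + gamma * b j * e)) <=
     2 * sumR n (fun j => b j * pi j)) by (apply IHn; intros; apply H; lia).
  destruct (H n ltac:(lia)) as [Hb [Hp Hq]].
  assert (Hd : 1/2 <= 1 + gamma * b n * e).
  { assert (- Rabs e <= e) by (pose proof (Rabs_Ropp e); pose proof (Rle_abs (- e)); lra).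
    assert (0 < gamma * b n) by (apply Rmult_lt_0_compat; lra). nra. }
  set (d := 1 + gamma * b n * e) in *.
  assert (Hbp : 0 < b n * pi n) by (apply Rmult_lt_0_compat; lra).
  assert (Hx : b n * pi n / d * d = b n * pi n) by (field; lra).
  assert (0 <= b n * pi n / d) by (apply Rle_mult_inv_pos; lra).
  assert (b n * pi n / d <= 2 * (b n * pi n)) by nra.
  lra.
Qed.

Lemma ident (a w : nat -> R) g lam m :
  (forall i, (i < m)%nat -> a i * g - lam <> 0) ->
  g * sumR m (fun i => a i * w i / (a i * g - lam)) =
  sumR m w + lam * sumR m (fun i => w i / (a i * g - lam)).
Proof.
  induction m; simpl; intros H; [ring|].
  rewrite Rmult_plus_distr_l, IHm by (intros; apply H; lia).
  assert (a m * g - lam <> 0) by (apply H; lia).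
  field; auto.
Qed.

Lemma cont_from_pt f a b :
  (forall x, a <= x <= b -> continuity_pt f x) -> cont_on f a b.
Proof.
  intros H x Hx eps Heps.
  destruct (H x Hx eps Heps) as [d [Hd Hy]].
  exists d; split; auto. intros y _ Hyd.
  destruct (Req_dec y x) as [->|Hne].
  - unfold Rminus; rewrite Rplus_opp_r, Rabs_R0; lra.
  - apply Hy. split; [split; [exact I| auto]| exact Hyd].
Qed.

Lemma cont_inv lam a b : b < lam -> cont_on (fun t => 1 / (t - lam)) a b.
Proof.
  intros Hl. apply cont_from_pt. intros x Hx.
  change (continuity_pt (fct_cte 1 / (id - fct_cte lam))%F x).
  apply continuity_pt_div.
  - apply continuity_pt_const; intros ? ?; reflexivity.
  - apply continuity_pt_minus; [apply derivable_continuous_pt, derivable_pt_id| apply continuity_pt_const; intros ? ?; reflexivity].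
  - unfold minus_fct, fct_cte, id. lra.
Qed.

Lemma cont_const c a b : cont_on (fun _ => c) a b.
Proof.
  intros x _ eps Heps. exists 1. split; [lra|]. intros.
  unfold Rminus; rewrite Rplus_opp_r, Rabs_R0; lra.
Qed.

Lemma s_bounds I lamstar lam :
  0 < lamstar -> prob_measure_on I 0 lamstar -> lamstar < lam ->
  - / (lam - lamstar) <= stieltjes I lam <= 0.
Proof.
  intros Hls [Hext [Hadd [Hsc [Hpos H1]]]] Hl. unfold stieltjes.
  pose proof (cont_inv lam 0 lamstar Hl) as Hc.
  split.
  - set (c := / (lam - lamstar)).
    assert (Hcc : I (fun _ => c) = c).
    { rewrite (Hext (fun _ => c) (fun _ => c * 1)) by (intros; ring).
      rewrite Hsc by apply cont_const. rewrite H1; ring. }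
    assert (0 <= I (fun t => 1 / (t - lam) + c)).
    { apply Hpos.
      - intros x Hx eps Heps.
        destruct (Hc x Hx eps Heps) as [d [Hd Hy]]. exists d; split; auto.
        intros y Hy1 Hy2. replace (1 / (y - lam) + c - (1 / (x - lam) + c))
          with (1 / (y - lam) - 1 / (x - lam)) by ring. auto.
      - intros x Hx. unfold c.
        assert (/ (lam - x) <= / (lam - lamstar)) by (apply Rinv_le_contravar; lra).
        replace (1 / (x - lam)) with (- / (lam - x)) by (field; lra). lra. }
    rewrite Hadd in H by (auto; apply cont_const). lra.
  - assert (0 <= I (fun t => -1 * (1 / (t - lam)))).
    { apply Hpos.
      - intros x Hx eps Heps.
        destruct (Hc x Hx eps Heps) as [d [Hd Hy]]. exists d; split; auto.
        intros y Hy1 Hy2. replace (-1 * (1 / (y - lam)) - -1 * (1 / (x - lam)))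
          with (- (1 / (y - lam) - 1 / (x - lam))) by ring. rewrite Rabs_Ropp. auto.
      - intros x Hx.
        assert (0 < / (lam - x)) by (apply Rinv_0_lt_compat; lra).
        replace (-1 * (1 / (x - lam))) with (/ (lam - x)) by (field; lra). lra. }
    rewrite Hsc in H by auto. lra.
Qed.

Theorem lemma3p2
  (gamma : R) (p n : nat) (a w b pi : nat -> R)
  (I : (R -> R) -> R) (lamstar : R) (e : R -> R) :
  0 < gamma ->
  (forall i, (i < p)%nat -> 0 < a i) ->
  (forall i, (i < p)%nat -> 0 < w i) ->
  sumR p w = 1 ->
  (forall j, (j < n)%nat -> 0 < b j) ->
  (forall j, (j < n)%nat -> 0 < pi j) ->
  sumR n pi = 1 ->
  (* mu: probability measure supported in [0, lamstar], lamstar = right endpoint *)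
  0 < lamstar ->
  prob_measure_on I 0 lamstar ->
  right_endpoint_in_support I 0 lamstar ->
  (* master equations *)
  (forall lam, lamstar < lam -> continuity_pt e lam) ->
  (forall lam, lamstar < lam -> forall j, (j < n)%nat ->
      e lam <> - / (gamma * b j)) ->
  (forall lam, lamstar < lam -> forall i, (i < p)%nat ->
      a i * Gfun gamma n b pi (e lam) <> lam) ->
  (forall lam, lamstar < lam ->
      stieltjes I lam =
      sumR p (fun i => w i / (a i * Gfun gamma n b pi (e lam) - lam))) ->
  (forall lam, lamstar < lam ->
      e lam =
      sumR p (fun i => a i * w i / (a i * Gfun gamma n b pi (e lam) - lam))) ->
  forall eps, 0 < eps ->
    exists M, forall lam, lamstar + eps < lam ->
      Rabs (Gfun gamma n b pi (e lam)) <= M.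
Proof.
  intros Hgam Ha Hw Hws Hb Hpi Hpis Hls Hmu _ _ _ Hne Hs He eps Heps.
  set (Sbp := sumR n (fun j => b j * pi j)).
  set (Bb := sumR n b).
  set (C := 1 + lamstar / eps).
  set (Q := gamma * (Bb + 1)).
  assert (HBb : 0 <= Bb) by (apply sumR_ge0; intros; left; auto).
  assert (HQ : 0 < Q) by (unfold Q; apply Rmult_lt_0_compat; lra).
  assert (HC : 0 < C) by (unfold C; assert (0 < lamstar / eps) by (apply Rdiv_lt_0_compat; lra); lra).
  exists (2 * Sbp + 2 * Q * C + 1).
  intros lam Hlam.
  assert (Hl : lamstar < lam) by lra.
  set (g := Gfun gamma n b pi (e lam)).
  set (s := stieltjes I lam).
  assert (Hid : g * e lam = 1 + lam * s).
  { unfold s. pose proof (He lam Hl) as He'. pose proof (Hs lam Hl) as Hs'.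
    fold g in He', Hs'. rewrite Hs', He', <- Hws. apply ident.
    intros i Hi. pose proof (Hne lam Hl i Hi). fold g in H. lra. }
  destruct (s_bounds I lamstar lam Hls Hmu Hl) as [Hs1 Hs2]. fold s in Hs1, Hs2.
  assert (Hge : Rabs (g * e lam) <= C).
  { rewrite Hid. apply Rabs_le. split.
    - assert (lam * s >= - lam / (lam - lamstar)).
      { unfold Rdiv. rewrite Ropp_mult_distr_l_reverse. nra. }
      assert (1 - lam / (lam - lamstar) = - (lamstar / (lam - lamstar))) by (field; lra).
      assert (lamstar / (lam - lamstar) <= lamstar / eps).
      { unfold Rdiv. apply Rmult_le_compat_l; [lra|]. apply Rinv_le_contravar; lra. }
      unfold C; lra.
    - assert (0 <= lamstar / eps) by (apply Rlt_le, Rdiv_lt_0_compat; lra).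
      unfold C; nra. }
  rewrite Rabs_mult in Hge.
  destruct (Rle_or_lt (Rabs g) (2 * Sbp + 2 * Q * C + 1)) as [Hok|Hbig]; auto.
  exfalso.
  assert (HSbp : 0 <= Sbp) by (apply sumR_ge0; intros; left; apply Rmult_lt_0_compat; auto).
  assert (Hqe : Q * Rabs (e lam) <= 1/2).
  { pose proof (Rabs_pos (e lam)). nra. }
  assert (HGb : 0 <= g <= 2 * Sbp).
  { apply G_bound; auto. intros j Hj. repeat split; auto.
    assert (b j <= Bb) by (apply sumR_mem; auto; intros; left; auto).
    pose proof (Rabs_pos (e lam)). pose proof (Hb j Hj). unfold Q in Hqe. nra. }
  destruct HGb as [HG1 HG2]. assert (Rabs g = g) by (apply Rabs_right; apply Rle_ge; exact HG1). rewrite H in Hbig. clear -Hbig HG2 HQ HC HSbp. nra.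
Qed.
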